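(* There exists a constant $c>0$ such that, for every positive integer $t$, every finite graph $G$ with average degree at least $2^{2^{c t^2}}$ contains a subgraph with average degree at least $t$ and girth at least $6$.
   Context: All graphs are finite and simple. The average degree of a graph $G$ is $d(G)=2e(G)/|V(G)|$. The girth of a graph is the length of a shortest cycle in it (a graph without cycles has infinite girth). A subgraph need not be induced. *)

(* Defs.v *)
From mathcomp Require Import all_boot.
From Stdlib Require Import Reals.
Set Implicit Arguments. Unset Strict Implicit. Unset Printing Implicit Defensive.

Definition simple_graph (T : finType) (V : {set T}) (e : rel T) : Prop :=
  symmetric e /\ irreflexive e /\ (forall x y, e x y -> (x \in V) && (y \in V)).

Definition edges (T : finType) (e : rel T) : {set {set T}} :=
  [set s : {set T} | [exists x : T, exists y : T, e x y && (s == [set x; y])]].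

Definition nedges (T : finType) (e : rel T) : nat := #|edges e|.

Definition avg_degree (T : finType) (V : {set T}) (e : rel T) : R :=
  (2 * INR (nedges e) / INR #|V|)%R.

Definition subgraph (T : finType) (V' : {set T}) (f : rel T) (V : {set T}) (e : rel T) : Prop :=
  simple_graph V' f /\ V' \subset V /\ (forall x y, f x y -> e x y).

Definition has_cycle_of_length (T : finType) (e : rel T) (k : nat) : Prop :=
  exists s : seq T, size s = k /\ 3 <= k /\ ucycle e s.

Definition girth_ge (T : finType) (e : rel T) (g : nat) : Prop :=
  forall k, k < g -> ~ has_cycle_of_length e k.

(* Main.v *)
Require Import Defs.
From mathcomp Require Import all_boot.
From Stdlib Require Import Reals.
From Stdlib Require Import Lra.
From mathcomp Require Import zify.
Import ssrnat.
Set Implicit Arguments. Unset Strict Implicit. Unset Printing Implicit Defensive.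
Import ssrnat.

Lemma card_pred_sum (U : finType) (P : pred U) : #|[set x | P x]| = \sum_x (P x : nat).
Proof.
rewrite -sum1_card big_mkcond /=; apply: eq_bigr => x _; rewrite inE; by case: (P x).
Qed.

Lemma card_pair_sum (U : finType) (P : pred (U * U)) :
  #|[set q | P q]| = \sum_x \sum_y (P (x, y) : nat).
Proof.
rewrite card_pred_sum (pair_big xpredT xpredT (fun x y => (P (x,y) : nat))) /=.
by apply: eq_bigr => [[x y]].
Qed.

Section Basic.
Variable T : finType.

Definition deg (g : rel T) x := #|[set y | g x y]|.
Definition e2 (g : rel T) := #|[set q : T * T | g q.1 q.2]|.

Lemma e2_sum g : e2 g = \sum_x deg g x.
Proof.
rewrite /e2 card_pair_sum; apply: eq_bigr => x _; by rewrite /deg card_pred_sum.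
Qed.

Lemma nedges_e2 (g : rel T) : symmetric g -> irreflexive g -> (nedges g).*2 = e2 g.
Proof.
move=> gs gi.
rewrite /e2 -sum1_card.
rewrite (partition_big (fun q : T * T => [set q.1; q.2]) (mem (edges g))); last first.
  move=> [x y]; rewrite inE /= => gxy; rewrite inE; apply/existsP; exists x; apply/existsP; exists y.
  by rewrite gxy eqxx.
rewrite /nedges -muln2 -sum_nat_const /=.
apply: eq_bigr => s.
rewrite inE => /existsP [x /existsP [y /andP [gxy /eqP ->]]].
have xy : x != y by apply/eqP => exy; move: gxy; rewrite exy gi.
rewrite (eq_bigl (fun q : T*T => (q == (x,y)) || (q == (y,x)))); last first.
  move=> [a b] /=; rewrite inE /=.
  apply/andP/orP.
  - move=> [gab /eqP E].
    have ha : a \in [set x; y] by rewrite -E !inE eqxx.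
    have hb : b \in [set x; y] by rewrite -E !inE eqxx orbT.
    have ab : a != b by apply/eqP => eab; move: gab; rewrite eab gi.
    move: ha hb ab; rewrite !inE => /orP [] /eqP -> /orP [] /eqP ->; rewrite ?eqxx //=.
    + by left.
    + by right.
  - case=> /eqP [-> ->]; split => //; first by rewrite gs.
    by rewrite setUC.
rewrite big_mkcond /=.
rewrite (bigD1 (x,y)) //= (bigD1 (y,x)) /=; last by rewrite xpair_eqE negb_and eq_sym xy.
rewrite !eqxx orbT /=.
rewrite big1 //.
move=> [a b] /andP [h1 h2]; rewrite (negbTE h1) (negbTE h2) //.
Qed.

End Basic.
Section Girth.
Variable T : finType.

Lemma girth_bip (f : rel T) (X : {set T}) :
  (forall x y, f x y -> (x \in X) != (y \in X)) ->
  (forall a b c d, uniq [:: a; b; c; d] -> f a b -> f b c -> f c d -> f d a -> False) ->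
  girth_ge f 6.
Proof.
move=> hb h4 k k6 [s [sz [k3 /andP [cyc un]]]].
rewrite -sz in k6 k3.
case: s sz k6 k3 cyc un => [|a [|b [|c [|d [|x [|y s]]]]]] //= _ _ _.
- rewrite /cycle /= => /and4P [fab fbc fca _] _.
  move: (hb _ _ fab) (hb _ _ fbc) (hb _ _ fca).
  by case: (a \in X); case: (b \in X); case: (c \in X).
- rewrite /cycle /= => /and5P [fab fbc fcd fda _] un.
  by apply: (h4 a b c d).
- rewrite /cycle /= => /andP [fab /andP [fbc /andP [fcd /andP [fdx /andP [fxa _]]]]] _.
  move: (hb _ _ fab) (hb _ _ fbc) (hb _ _ fcd) (hb _ _ fdx) (hb _ _ fxa).
  by case: (a \in X); case: (b \in X); case: (c \in X); case: (d \in X); case: (x \in X).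
Qed.

Lemma avg_ge (V' : {set T}) (f : rel T) (t : nat) :
  simple_graph V' f -> V' != set0 -> (forall x, x \in V' -> t <= deg f x) ->
  (INR t <= avg_degree V' f)%R.
Proof.
move=> [fs [fi fV]] hV hdeg.
have key : t * #|V'| <= (nedges f).*2.
  rewrite nedges_e2 // e2_sum.
  rewrite (bigID (fun x => x \in V')) /= -[t * _]addn0 leq_add //.
  rewrite mulnC -sum_nat_const.
  by apply: leq_sum => x xV; apply: hdeg.
have Vpos : (0 < #|V'|) by rewrite card_gt0.
rewrite /avg_degree.
have HV : (0 < INR #|V'|)%R by apply: lt_0_INR; apply/ltP.
apply (Rmult_le_reg_r (INR #|V'|)) => //.
rewrite /Rdiv Rmult_assoc Rinv_l; last by apply: Rgt_not_eq.
rewrite Rmult_1_r -mult_INR.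
have -> : (2 * INR (nedges f))%R = INR ((nedges f).*2) by rewrite -muln2 mult_INR /=; ring.
apply: le_INR; apply/leP; done.
Qed.

End Girth.
Section MaxCut.
Variable T : finType.

Definition cross (g : rel T) (X : {set T}) := [rel x y | g x y && ((x \in X) != (y \in X))].

Definition tog (x : T) (X : {set T}) := if x \in X then X :\ x else x |: X.

Lemma tog_in x X z : (z \in tog x X) = (if z == x then ~~ (x \in X) else z \in X).
Proof.
rewrite /tog; case: (boolP (z == x)) => [/eqP -> | zx].
  by case: (boolP (x \in X)) => hx; rewrite !inE ?eqxx ?hx.
by case: (boolP (x \in X)) => hx; rewrite !inE ?(negbTE zx).
Qed.

Lemma tog_inv x : involutive (tog x).
Proof.
move=> X; apply/setP => z; rewrite !tog_in.
case: (boolP (z == x)) => [/eqP -> | zx] //; by rewrite eqxx negbK.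
Qed.

Lemma card_cross_sets (x y : T) : x != y ->
  (#|[set X : {set T} | (x \in X) != (y \in X)]|).*2 = #|{set T}|.
Proof.
move=> xy.
set A := [set X : {set T} | (x \in X) != (y \in X)].
have yx : (y == x) = false by rewrite eq_sym (negbTE xy).
have h1 : tog x @: A \subset ~: A.
  apply/subsetP => Z /imsetP [X XA ->]; move: XA; rewrite !inE !tog_in eqxx yx.
  by case: (x \in X); case: (y \in X).
have h2 : tog x @: (~: A) \subset A.
  apply/subsetP => Z /imsetP [X XA ->]; move: XA; rewrite !inE !tog_in eqxx yx.
  by case: (x \in X); case: (y \in X).
have inj : injective (tog x) by apply: inv_inj; apply: tog_inv.
have c1 := subset_leq_card h1; have c2 := subset_leq_card h2.
rewrite !card_imset // in c1 c2.
have e : #|A| = #|~: A| by apply/eqP; rewrite eqn_leq c1 c2.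
by rewrite -addnn {2}e cardsC.
Qed.

Lemma maxcut (g : rel T) : irreflexive g -> exists X : {set T}, e2 g <= (e2 (cross g X)).*2.
Proof.
move=> gi.
have sum_eq : (\sum_(X : {set T}) e2 (cross g X)) * 2 = e2 g * #|{set T}|.
  have -> : \sum_(X : {set T}) e2 (cross g X) =
            \sum_(X : {set T}) \sum_(q : T * T) ((g q.1 q.2 && ((q.1 \in X) != (q.2 \in X))) : nat).
    by apply: eq_bigr => X _; rewrite /e2 card_pred_sum.
  rewrite exchange_big /= big_distrl /=.
  rewrite /e2 card_pred_sum big_distrl /=.
  apply: eq_bigr => [[x y]] _ /=.
  case: (boolP (g x y)) => gxy /=; last by rewrite mul0n big1.
  have xy : x != y by apply/eqP => exy; move: gxy; rewrite exy gi.
  by rewrite mul1n -(card_cross_sets xy) card_pred_sum muln2.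
case: (boolP [exists X, e2 g <= (e2 (cross g X)).*2]) => [/existsP // | ].
rewrite negb_exists => /forallP H; exfalso.
have : (\sum_(X : {set T}) e2 (cross g X)) * 2 < e2 g * #|{set T}|.
  rewrite big_distrl /= mulnC -sum_nat_const.
  have ne : (0 < #|{set T}|) by apply/card_gt0P; exists set0.
  move/card_gt0P: ne => [X0 _].
  rewrite (bigD1 X0) //= [X in _ < X](bigD1 X0) //=.
  rewrite -addSn leq_add //.
    by move: (H X0); rewrite -ltnNge muln2.
  apply: leq_sum => X _; move: (H X); rewrite -ltnNge muln2; apply: ltnW.
by rewrite sum_eq ltnn.
Qed.
End MaxCut.
Section Degen.
Variable T : finType.

Lemma degen_aux (h : rel T) (t : nat) n : forall U : {set T}, #|U| = n ->
  (exists W : {set T}, [/\ W \subset U, W != set0 & forall x, x \in W -> t <= #|[set y in W | h x y]|]) \/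
  (exists s : seq T, [/\ uniq s, (forall x, (x \in s) = (x \in U)) &
       forall x, x \in U -> #|[set y in U | h x y && (index x s < index y s)]| < t]).
Proof.
elim: n => [|n IH] U cU.
  right; exists [::]; split => //.
  - by move=> x; move/eqP: cU; rewrite cards_eq0 => /eqP ->; rewrite inE.
  - by move=> x; move/eqP: cU; rewrite cards_eq0 => /eqP ->; rewrite inE.
case: (boolP [forall x in U, t <= #|[set y in U | h x y]|]) => [/forall_inP Hall | ].
  left; exists U; split => //.
  by apply/eqP => U0; move: cU; rewrite U0 cards0.
rewrite negb_forall_in => /existsP [x /andP [xU]]; rewrite -ltnNge => dx.
have cU' : #|U :\ x| = n by move: cU; rewrite (cardsD1 x) xU add1n => -[].
case: (IH _ cU') => [[W [WU WN Wd]] | [s [us ms ds]]].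
  left; exists W; split => //; apply: (subset_trans WU); apply: subsetDl.
right; exists (x :: s); split.
- by rewrite /= us andbT ms !inE eqxx.
- move=> z; rewrite inE ms !inE.
  case: (boolP (z == x)) => [/eqP -> | //]; by rewrite xU.
- move=> z zU.
  case: (boolP (z == x)) => [/eqP -> | zx].
    apply: leq_ltn_trans dx; apply: subset_leq_card; apply/subsetP => y.
    by rewrite !inE => /andP [-> /andP [-> _]].
  have zU' : z \in U :\ x by rewrite !inE zx.
  apply: leq_ltn_trans (ds z zU'); apply: subset_leq_card; apply/subsetP => y.
  rewrite !inE /= => /andP [yU /andP [hzy]].
  rewrite eq_sym (negbTE zx).
  case: (boolP (x == y)) => [// | xy] /=.
  by rewrite ltnS eq_sym xy yU hzy.
Qed.

Lemma degen (h : rel T) (t : nat) :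
  (exists W : {set T}, W != set0 /\ forall x, x \in W -> t <= #|[set y in W | h x y]|) \/
  (exists s : seq T, [/\ uniq s, (forall x, x \in s) &
       forall x, #|[set y | h x y && (index x s < index y s)]| < t]).
Proof.
case: (@degen_aux h t #|[set: T]| [set: T] erefl) => [[W [_ WN Wd]] | [s [us ms ds]]].
  by left; exists W.
right; exists s; split => //.
  by move=> x; rewrite ms inE.
move=> x; move: (ds x (in_setT x)).
congr (_ < _); apply: eq_card => y; by rewrite !inE.
Qed.
End Degen.
Section MaxC4.
Variable T : finType.

Definition c4free (h : rel T) :=
  ~~ [exists a, exists b, exists c, exists d, [&& uniq [:: a; b; c; d], h a b, h b c, h c d & h d a]].

Definition relS (S : {set T * T}) : rel T := fun x y => (x, y) \in S.

Definition validS (g : rel T) (S : {set T * T}) :=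
  [&& S \subset [set q | g q.1 q.2], [forall q in S, (q.2, q.1) \in S] & c4free (relS S)].

Lemma uniq4 (a b c d : T) :
  uniq [:: a; b; c; d] = [&& a != b, a != c, a != d, b != c, b != d & c != d].
Proof. by rewrite /= !inE !negb_or !andbT -!andbA. Qed.

Ltac uniq4_tac u := move: u; rewrite !uniq4 => /andP [? /andP [? /andP [? /andP [? /andP [? ?]]]]];
  repeat (apply/andP; split); by [ | rewrite eq_sym].

Lemma c4_rot (a b c d : T) :
  uniq [:: a; b; c; d] -> uniq [:: b; c; d; a].
Proof. move=> u; uniq4_tac u. Qed.

Lemma c4_new (S : {set T * T}) (x y a b c d : T) :
  (forall u v, (u, v) \in S -> (v, u) \in S) ->
  uniq [:: a; b; c; d] ->
  ((a, b) == (x, y)) || ((a, b) == (y, x)) ->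
  (b, c) \in S -> (c, d) \in S -> (d, a) \in S ->
  exists a' b', [/\ uniq [:: x; a'; b'; y], (x, a') \in S, (a', b') \in S & (b', y) \in S].
Proof.
move=> Ss u /orP [] /eqP [ea eb] Sbc Scd Sda; subst.
- exists d, c; split; [uniq4_tac u | exact: Ss | exact: Ss | exact: Ss].
- exists c, d; split; [uniq4_tac u | done | done | done].
Qed.

Definition newe (x y a b : T) := ((a, b) == (x, y)) || ((a, b) == (y, x)).

Lemma old_of (S : {set T * T}) (x y a b c d : T) :
  uniq [:: a; b; c; d] -> newe x y a b ->
  ((b, c) \in S) || newe x y b c -> (b, c) \in S.
Proof.
move=> u /orP [] /eqP [ea eb] /orP [// | /orP [] /eqP [e1 e2]]; subst;
  by move: u; rewrite /= !inE ?eqxx /= ?orbT ?andbF.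
Qed.

Lemma old_of2 (S : {set T * T}) (x y a b c d : T) :
  uniq [:: a; b; c; d] -> newe x y a b ->
  ((c, d) \in S) || newe x y c d -> (c, d) \in S.
Proof.
move=> u /orP [] /eqP [ea eb] /orP [// | /orP [] /eqP [e1 e2]]; subst;
  by move: u; rewrite /= !inE ?eqxx /= ?orbT ?andbF.
Qed.

Lemma old_of3 (S : {set T * T}) (x y a b c d : T) :
  uniq [:: a; b; c; d] -> newe x y a b ->
  ((d, a) \in S) || newe x y d a -> (d, a) \in S.
Proof.
move=> u /orP [] /eqP [ea eb] /orP [// | /orP [] /eqP [e1 e2]]; subst;
  by move: u; rewrite /= !inE ?eqxx /= ?orbT ?andbF.
Qed.

Lemma c4_case (S : {set T * T}) (x y a b c d : T) :
  (forall u v, (u, v) \in S -> (v, u) \in S) ->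
  uniq [:: a; b; c; d] -> newe x y a b ->
  ((b, c) \in S) || newe x y b c -> ((c, d) \in S) || newe x y c d ->
  ((d, a) \in S) || newe x y d a ->
  exists a' b', [/\ uniq [:: x; a'; b'; y], (x, a') \in S, (a', b') \in S & (b', y) \in S].
Proof.
move=> Ss u n hbc hcd hda.
apply: (c4_new Ss u n).
- exact: (old_of u n hbc).
- exact: (old_of2 u n hcd).
- exact: (old_of3 u n hda).
Qed.

Lemma exists_maxH (g : rel T) : symmetric g -> irreflexive g ->
  exists S, validS g S /\ (forall x y, g x y -> (x, y) \notin S ->
    exists a b, [/\ uniq [:: x; a; b; y], (x, a) \in S, (a, b) \in S & (b, y) \in S]).
Proof.
move=> gs gi.
have v0 : validS g (set0 : {set T * T}).
  rewrite /validS sub0set /=; apply/andP; split.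
    by apply/forall_inP => q; rewrite inE.
  rewrite /c4free; apply/negP => /existsP [a /existsP [b /existsP [c /existsP [d]]]].
  by rewrite /relS inE andbF.
case: (@arg_maxnP _ _ (validS g) (fun S : {set T * T} => #|S|) v0) => S vS maxS.
exists S; split => // x y gxy xyS.
set S' := S :|: [set (x, y); (y, x)].
have Ss : forall u v, (u, v) \in S -> (v, u) \in S.
  move: vS => /and3P [_ /forall_inP H _] u v uv; exact: (H (u, v) uv).
have Sg : S \subset [set q | g q.1 q.2] by case/and3P: vS.
have Sc : c4free (relS S) by case/and3P: vS.
have nv : ~~ validS g S'.
  apply/negP => vS'; move: (maxS S' vS').
  rewrite /S' cardsU.
  have : #|S :&: [set (x, y); (y, x)]| <= 1.
    rewrite -(cards1 (y, x)); apply: subset_leq_card; apply/subsetP => q.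
    rewrite !inE => /andP [qS /orP [/eqP E | ->]] //.
    by move: qS xyS; rewrite E => ->.
  rewrite cards2.
  have -> : ((x, y) != (y, x)) = true.
    by apply/negP => /eqP [E]; move: gxy; rewrite E gi.
  move=> h1 h2; lia.
have sub' : S' \subset [set q | g q.1 q.2].
  apply/subsetP => q; rewrite !inE => /orP [qS | /orP [] /eqP ->] /=.
  - by move/subsetP: Sg => /(_ q qS); rewrite inE.
  - done.
  - by rewrite gs.
have sym' : [forall q in S', (q.2, q.1) \in S'].
  apply/forall_inP => [[u v]]; rewrite !inE /= => /orP [uvS | /orP [] /eqP [-> ->]].
  - by rewrite Ss.
  - by rewrite eqxx !orbT.
  - by rewrite eqxx !orbT.
move: nv; rewrite /validS sub' sym' /= /c4free negbK.
move=> /existsP [a /existsP [b /existsP [c /existsP [d /and5P [u hab hbc hcd hda]]]]].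
move: hab hbc hcd hda; rewrite /relS !inE -!/(newe x y _ _) => hab hbc hcd hda.
case: (boolP (newe x y a b)) => nab.
  exact: (c4_case Ss u nab hbc hcd hda).
have Sab : (a, b) \in S by move: hab; rewrite (negbTE nab) orbF.
case: (boolP (newe x y b c)) => nbc.
  have u' := c4_rot u.
  apply: (c4_case Ss u' nbc hcd hda); by rewrite Sab.
have Sbc : (b, c) \in S by move: hbc; rewrite (negbTE nbc) orbF.
case: (boolP (newe x y c d)) => ncd.
  have u' := c4_rot (c4_rot u).
  apply: (c4_case Ss u' ncd hda); by rewrite ?Sab ?Sbc.
have Scd : (c, d) \in S by move: hcd; rewrite (negbTE ncd) orbF.
case: (boolP (newe x y d a)) => nda.
  have u' := c4_rot (c4_rot (c4_rot u)).
  apply: (c4_case Ss u' nda); by rewrite ?Sab ?Sbc ?Scd.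
have Sda : (d, a) \in S by move: hda; rewrite (negbTE nda) orbF.
exfalso; move/negP: Sc; apply; apply/existsP; exists a; apply/existsP; exists b;
  apply/existsP; exists c; apply/existsP; exists d.
by rewrite /relS u Sab Sbc Scd Sda.
Qed.
End MaxC4.

Import ssrnat.

Lemma expn_pow m n : expn m n = Nat.pow m n.
Proof. elim: n => [|n IH] //; by rewrite expnS IH /= mulnE. Qed.

Lemma INR_expn m n : INR (m ^ n) = (INR m ^ n)%R.
Proof. by rewrite expn_pow pow_INR. Qed.

Lemma INR_muln m n : INR (m * n) = (INR m * INR n)%R.
Proof. by rewrite mulnE mult_INR. Qed.

Lemma thr_nat (t : nat) (T : finType) (V : {set T}) (e : rel T) : V != set0 ->
  (Rpower 2 (Rpower 2 (INR 10 * INR t ^ 2)) <= avg_degree V e)%R ->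
  2 ^ (2 ^ (10 * (t * t))) * #|V| <= (nedges e).*2.
Proof.
move=> Vn hth.
set K := 2 ^ (10 * (t * t)).
have thr : (Rpower 2 (Rpower 2 (INR 10 * INR t ^ 2)) = INR (2 ^ K))%R.
  have -> : (INR 10 * INR t ^ 2 = INR (10 * (t * t)))%R.
    by rewrite !INR_muln /=; ring.
  rewrite Rpower_pow; last by lra.
  have -> : (2 ^ (10 * (t * t)))%R = INR K by rewrite /K INR_expn.
  rewrite Rpower_pow; last by lra.
  by rewrite INR_expn.
rewrite thr in hth.
have Vpos : (0 < #|V|) by rewrite card_gt0.
have HV : (0 < INR #|V|)%R by apply: lt_0_INR; apply/ltP.
have : (INR (2 ^ K) * INR #|V| <= 2 * INR (nedges e))%R.
  have := Rmult_le_compat_r (INR #|V|) _ _ (Rlt_le _ _ HV) hth.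
  rewrite /avg_degree /Rdiv Rmult_assoc Rinv_l; last by apply: Rgt_not_eq.
  by rewrite Rmult_1_r.
rewrite -INR_muln.
have -> : (2 * INR (nedges e))%R = INR ((nedges e).*2) by rewrite -muln2 INR_muln /=; ring.
by move/INR_le/leP.
Qed.

Import ssrnat.

Lemma card_bigcup_le (U I : finType) (P : pred I) (F : I -> {set U}) :
  #|\bigcup_(i | P i) F i| <= \sum_(i | P i) #|F i|.
Proof.
apply: (big_ind2 (fun (A : {set U}) n => #|A| <= n)).
- by rewrite cards0.
- move=> A1 n1 A2 n2 h1 h2; apply: leq_trans (leq_card_setU A1 A2) _; exact: leq_add.
- by [].
Qed.

Lemma card_setU_le (U : finType) (A B : {set U}) : #|A :|: B| <= #|A| + #|B|.
Proof. exact: leq_card_setU. Qed.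

Section Orient.
Variable T : finType.
Variable h : rel T.
Hypothesis hs : symmetric h.
Hypothesis hi : irreflexive h.
Variable s : seq T.
Hypothesis sall : forall x, x \in s.

Definition rk x := index x s.
Definition out z := [set y | h z y && (rk z < rk y)].
Definition inn z := [set y | h z y && (rk y < rk z)].
Definition out2 z := \bigcup_(y in out z) out y.
Definition out3 z := \bigcup_(y in out z) out2 y.
Definition Rz z := setX [set z] (out3 z) :|: setX (out z) (out2 z).
Definition Wc c := (\bigcup_(b in inn c) (inn b :|: out b)) :\ c.

Lemma rk_inj : injective rk.
Proof.
move=> x y e; rewrite -(nth_index x (sall x)) -(nth_index x (sall y)).
by rewrite /rk in e; rewrite e.
Qed.

Lemma rk_neq x y : x != y -> rk x != rk y.
Proof. by move=> xy; apply/negP => /eqP /rk_inj /eqP; apply/negP. Qed.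

Lemma in_out z y : h z y -> (y \in out z) = (rk z < rk y).
Proof. by move=> hzy; rewrite inE hzy. Qed.

Lemma in_inn z y : h z y -> (y \in inn z) = (rk y < rk z).
Proof. by move=> hzy; rewrite inE hzy. Qed.

Lemma adj_io z y : h z y -> y \in inn z :|: out z.
Proof.
move=> hzy; have zy : z != y by apply/eqP => e; move: hzy; rewrite e hi.
have := rk_neq zy; rewrite inE in_inn // in_out //.
case: ltngtP => //.
Qed.

Lemma pattern u a b v : uniq [:: u; a; b; v] -> h u a -> h a b -> h b v ->
  [exists z, ((u, v) \in Rz z) || ((v, u) \in Rz z)] ||
  [exists c, ((u \in inn c) && (v \in Wc c)) || ((v \in inn c) && (u \in Wc c))].
Proof.
move=> un hua hab hbv.
have hau : h a u by rewrite hs.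
have hba : h b a by rewrite hs.
have hvb : h v b by rewrite hs.
move: (un); rewrite uniq4 => /andP [ua /andP [ub /andP [uv /andP [ab /andP [av bv]]]]].
have nua := rk_neq ua; have nab := rk_neq ab; have nbv := rk_neq bv.
(* collider at a *)
case: (boolP ((rk u < rk a) && (rk b < rk a))) => [/andP [l1 l2] | ca].
  apply/orP; right; apply/existsP; exists a; apply/orP; left.
  rewrite in_inn // l1 /=.
  rewrite /Wc in_setD1 (eq_sym v a) av /=.
  apply/bigcupP; exists b; first by rewrite in_inn.
  exact: adj_io.
case: (boolP ((rk a < rk b) && (rk v < rk b))) => [/andP [l1 l2] | cb].
  apply/orP; right; apply/existsP; exists b; apply/orP; right.
  rewrite in_inn // l2 /=.
  rewrite /Wc in_setD1 ub /=.
  apply/bigcupP; exists a; first by rewrite in_inn.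
  exact: adj_io.
apply/orP; left; apply/existsP.
case: (ltngtP (rk u) (rk a)) nua => // lua _.
  have lab : rk a < rk b.
    move: ca; rewrite lua /=; case: ltngtP nab => //.
  have lbv : rk b < rk v.
    move: cb; rewrite lab /=; case: ltngtP nbv => //.
  exists u; apply/orP; left; rewrite /Rz in_setU !in_setX in_set1 eqxx /=.
  apply/orP; left; rewrite /out3; apply/bigcupP; exists a; first by rewrite in_out.
  rewrite /out2; apply/bigcupP; exists b; first by rewrite in_out.
  by rewrite in_out.
case: (ltngtP (rk a) (rk b)) nab => // lab _.
  have lbv : rk b < rk v.
    move: cb; rewrite lab /=; case: ltngtP nbv => //.
  exists a; apply/orP; left; rewrite /Rz in_setU !in_setX in_set1.
  apply/orP; right; apply/andP; split; first by rewrite in_out.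
  rewrite /out2; apply/bigcupP; exists b; first by rewrite in_out.
  by rewrite in_out.
case: (ltngtP (rk b) (rk v)) nbv => // lbv _.
  exists b; apply/orP; right; rewrite /Rz in_setU !in_setX in_set1.
  apply/orP; right; apply/andP; split; first by rewrite in_out.
  rewrite /out2; apply/bigcupP; exists a; first by rewrite in_out.
  by rewrite in_out.
exists v; apply/orP; right; rewrite /Rz in_setU !in_setX in_set1 eqxx /=.
apply/orP; left; rewrite /out3; apply/bigcupP; exists b; first by rewrite in_out.
rewrite /out2; apply/bigcupP; exists a; first by rewrite in_out.
by rewrite in_out.
Qed.


Variable V : {set T}.
Hypothesis hV : forall x y, h x y -> x \in V.
Variable t : nat.
Hypothesis hout : forall z, #|out z| < t.

Lemma out_nV z : z \notin V -> out z = set0.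
Proof.
move=> zV; apply/setP => y; rewrite !inE; case: (boolP (h z y)) => // hzy.
by move: zV; rewrite (hV hzy).
Qed.

Lemma inn_nV z : z \notin V -> inn z = set0.
Proof.
move=> zV; apply/setP => y; rewrite !inE; case: (boolP (h z y)) => // hzy.
by move: zV; rewrite (hV hzy).
Qed.

Lemma card_out z : #|out z| <= t.
Proof. exact: ltnW. Qed.

Lemma card_out2 z : #|out2 z| <= t * t.
Proof.
apply: leq_trans (card_bigcup_le _ _) _.
apply: leq_trans (_ : \sum_(y in out z) t <= _).
  by apply: leq_sum => y _; apply: card_out.
by rewrite sum_nat_const leq_mul2r card_out orbT.
Qed.

Lemma card_out3 z : #|out3 z| <= t * t * t.
Proof.
apply: leq_trans (card_bigcup_le _ _) _.
apply: leq_trans (_ : \sum_(y in out z) (t * t) <= _).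
  by apply: leq_sum => y _; apply: card_out2.
by rewrite sum_nat_const mulnC leq_mul2l card_out orbT.
Qed.

Lemma card_Rz' z : #|Rz z| <= #|out3 z| + #|out z| * #|out2 z|.
Proof. by apply: leq_trans (card_setU_le _ _) _; rewrite !cardsX cards1 mul1n. Qed.

Lemma card_Rz z : #|Rz z| <= (t * t * t).*2.
Proof.
apply: leq_trans (card_setU_le _ _) _.
rewrite !cardsX cards1 mul1n -addnn leq_add ?card_out3 //.
rewrite -mulnA; apply: leq_mul; [exact: card_out | exact: card_out2].
Qed.

Lemma sum_V (F : T -> nat) : (forall z, z \notin V -> F z = 0) -> \sum_z F z = \sum_(z in V) F z.
Proof.
move=> F0; by rewrite (bigID (fun z => z \in V)) /= [X in _ + X]big1 ?addn0.
Qed.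

Lemma sum_Rz : \sum_z #|Rz z| <= (t * t * t).*2 * #|V|.
Proof.
rewrite sum_V; last first.
  move=> z zV; apply/eqP; rewrite -leqn0; apply: leq_trans (card_Rz' z) _.
  by rewrite /out2 /out3 out_nV // big_set0 cards0 mul0n.
rewrite mulnC -sum_nat_const; apply: leq_sum => z _; exact: card_Rz.
Qed.

Lemma sum_out : \sum_z #|out z| <= t * #|V|.
Proof.
rewrite sum_V; last by move=> z zV; rewrite out_nV // cards0.
rewrite mulnC -sum_nat_const; apply: leq_sum => z _; exact: card_out.
Qed.

Lemma sum_inn_out (F : T -> nat) : \sum_c \sum_(b in inn c) F b = \sum_b #|out b| * F b.
Proof.
rewrite (eq_bigr (fun c => \sum_b ((b \in inn c) * F b))); last first.
  by move=> c _; rewrite big_mkcond /=; apply: eq_bigr => b _; case: (b \in inn c); rewrite ?mul1n ?mul0n.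
rewrite exchange_big /=; apply: eq_bigr => b _.
rewrite -big_distrl /= card_pred_sum.
congr (_ * _); apply: eq_bigr => c _; by rewrite !inE hs.
Qed.

Lemma sum_inn : \sum_c #|inn c| = \sum_b #|out b|.
Proof.
have := sum_inn_out (fun _ => 1).
rewrite (eq_bigr (fun c => #|inn c|)); last by move=> c _; rewrite sum1_card.
by move=> ->; apply: eq_bigr => b _; rewrite muln1.
Qed.

Lemma sum_Wc : \sum_c #|Wc c| <= (t * t).*2 * #|V|.
Proof.
apply: leq_trans (_ : \sum_c \sum_(b in inn c) (#|inn b| + #|out b|) <= _).
  apply: leq_sum => c _.
  apply: leq_trans (subset_leq_card (subsetDl _ _)) _.
  apply: leq_trans (card_bigcup_le _ _) _.
  apply: leq_sum => b _; exact: card_setU_le.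
rewrite sum_inn_out.
apply: leq_trans (_ : \sum_b t * (#|inn b| + #|out b|) <= _).
  by apply: leq_sum => b _; rewrite leq_mul2r card_out orbT.
rewrite -big_distrr /= big_split /= sum_inn addnn.
rewrite -doubleMr -doubleMl leq_double -mulnA leq_mul2l; apply/orP; right.
exact: sum_out.
Qed.

Lemma e2_h : e2 h <= (t * #|V|).*2.
Proof.
rewrite e2_sum.
apply: leq_trans (_ : \sum_x (#|inn x| + #|out x|) <= _).
  apply: leq_sum => x _; rewrite /deg.
  apply: leq_trans (_ : #|inn x :|: out x| <= _); last exact: card_setU_le.
  apply: subset_leq_card; apply/subsetP => y; rewrite inE; exact: adj_io.
by rewrite big_split /= sum_inn addnn leq_double sum_out.
Qed.
End Orient.

Import ssrnat.

Lemma card_swap (U : finType) (A : {set U * U}) : #|[set q | (q.2, q.1) \in A]| = #|A|.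
Proof.
have -> : [set q | (q.2, q.1) \in A] = [set (q.2, q.1) | q in A].
  apply/setP => [[x y]]; rewrite inE /=; apply/idP/imsetP => [H | [[a b] H [-> ->]]] //.
  by exists (y, x).
by apply: card_imset => [[a b] [c d]] [-> ->].
Qed.

Lemma avg_exists (U : finType) (A B : U -> nat) :
  \sum_c B c <= \sum_c A c -> 0 < \sum_c A c -> exists c, B c <= A c /\ 0 < A c.
Proof.
move=> hBA hA.
case: (boolP [exists c, (B c <= A c) && (0 < A c)]) => [/existsP [c /andP [h1 h2]] | ].
  by exists c.
rewrite negb_exists => /forallP H; exfalso.
have [c0 _ Ac0] : exists2 c, true & 0 < A c.
  case: (boolP [exists c, 0 < A c]) => [/existsP [c Hc] | ]; first by exists c.
  rewrite negb_exists => /forallP H2; move: hA.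
  by rewrite big1 // => c _; move: (H2 c); rewrite lt0n negbK => /eqP.
have : \sum_c A c < \sum_c B c.
  rewrite (bigD1 c0) //= [X in _ < X](bigD1 c0) //=.
  rewrite -addSn leq_add //.
    by move: (H c0); rewrite Ac0 andbT -ltnNge.
  apply: leq_sum => c _; move: (H c); case: (boolP (0 < A c)) => Ac.
    by rewrite andbT -ltnNge => /ltnW.
  by move: Ac; rewrite lt0n negbK => /eqP ->.
by rewrite ltnNge hBA.
Qed.

Section Step.
Variable T : finType.
Variable e : rel T.
Variable t : nat.
Variable V0 : {set T}.
Variable X : {set T}.

Definition good := exists (V' : {set T}) (f : rel T),
  subgraph V' f V0 e /\ V' != set0 /\ (INR t <= avg_degree V' f)%R /\ girth_ge f 6.

Lemma step (g : rel T) (V : {set T}) (M N : nat) :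
  0 < t -> symmetric g -> irreflexive g -> (forall x y, g x y -> e x y) ->
  (forall x y, g x y -> x \in V) -> V \subset V0 ->
  (forall x y, g x y -> (x \in X) != (y \in X)) ->
  V != set0 -> 0 < M -> 12 * (t * t * t) * M <= N -> N * #|V| <= M * e2 g ->
  good \/ exists c (g' : rel T) (V' : {set T}),
    [/\ [/\ c \in V, c \notin V', V' \subset V & V' != set0],
        [/\ symmetric g', irreflexive g', (forall x y, g' x y -> g x y)
          & (forall x y, g' x y -> x \in V')],
        N * #|V'| <= (12 * (t * t) * M) * e2 g'
      & (forall y, y \in V' -> (y \in X) != (c \in X) -> g c y)].
Proof.
move=> t0 gs gi ge gV VV0 gX Vn M0 hN hE.
case: (exists_maxH gs gi) => S [vS maxS].
set h := relS S.
have hg : forall x y, h x y -> g x y.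
  move=> x y; rewrite /h /relS => xyS.
  by case/and3P: vS => /subsetP /(_ _ xyS); rewrite inE.
have hs : symmetric h.
  move=> x y; apply/idP/idP => H;
  by case/and3P: vS => _ /forall_inP /(_ _ H) /= H' _.
have hi : irreflexive h by move=> x; apply/negP => /hg; rewrite gi.
have hc4 : c4free h by case/and3P: vS.
have hV : forall x y, h x y -> x \in V by move=> x y /hg /gV.
case: (degen h t) => [[W [Wn Wd]] | [s [us sall sd]]].
  left; exists W, [rel x y | [&& x \in W, y \in W & h x y]].
  have simp : simple_graph W [rel x y | [&& x \in W, y \in W & h x y]].
    split; [|split].
    - by move=> x y /=; rewrite hs andbCA.
    - by move=> x /=; rewrite hi !andbF.
    - by move=> x y /= /and3P [-> -> _].
  split; [|split; [|split]] => //.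
  - split => //; split.
      apply/subsetP => x xW; apply: (subsetP VV0).
      have : 0 < #|[set y in W | h x y]| by apply: leq_trans t0 (Wd x xW).
      by rewrite card_gt0 => /set0Pn [y]; rewrite inE => /andP [_ /hV].
    by move=> x y /= /and3P [_ _ /hg /ge].
  - apply: avg_ge => // x xW; apply: leq_trans (Wd x xW) _.
    apply: subset_leq_card; apply/subsetP => y; rewrite !inE /= xW => /andP [-> ->] //.
  - apply: (@girth_bip _ _ X).
      by move=> x y /= /and3P [_ _ /hg /gX].
    move=> a b c d u /and3P [_ _ hab] /and3P [_ _ hbc] /and3P [_ _ hcd] /and3P [_ _ hda].
    move/negP: hc4; apply; apply/existsP; exists a; apply/existsP; exists b;
    apply/existsP; exists c; apply/existsP; exists d.
    by rewrite u hab hbc hcd hda.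
right.
have hout : forall z, #|out h s z| < t by move=> z; exact: sd z.
set Cc := fun c => [set q : T * T | [&& g q.1 q.2, q.1 \in inn h s c & q.2 \in Wc h s c]].
have cover : [set q : T * T | g q.1 q.2] \subset
   [set q : T * T | h q.1 q.2] :|: (\bigcup_z (Rz h s z :|: [set q | (q.2, q.1) \in Rz h s z]))
   :|: (\bigcup_c (Cc c :|: [set q | (q.2, q.1) \in Cc c])).
  apply/subsetP => [[u v]]; rewrite inE /= => guv.
  case: (boolP (h u v)) => huv; first by rewrite !inE /= huv.
  have [a [b [un hua hab hbv]]] := maxS u v guv huv.
  have := pattern hs hi sall un hua hab hbv.
  case/orP => [/existsP [z hz] | /existsP [c hc]].
    rewrite in_setU; apply/orP; left; rewrite in_setU; apply/orP; right.
    by apply/bigcupP; exists z => //; rewrite in_setU inE /=.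
  rewrite in_setU; apply/orP; right; apply/bigcupP; exists c => //.
  case/orP: hc => /andP [h1 h2].
    by rewrite in_setU; apply/orP; left; rewrite /Cc in_set /= guv h1 h2.
  by rewrite in_setU; apply/orP; right; rewrite in_set /= /Cc in_set /= gs guv h1 h2.
have e2g : e2 g <= e2 h + (\sum_z #|Rz h s z|).*2 + (\sum_c #|Cc c|).*2.
  rewrite {1}/e2; apply: leq_trans (subset_leq_card cover) _.
  apply: leq_trans (card_setU_le _ _) _; apply: leq_add.
    apply: leq_trans (card_setU_le _ _) _; apply: leq_add => //.
    apply: leq_trans (card_bigcup_le _ _) _.
    rewrite -addnn -big_split /=; apply: leq_sum => z _.
    by apply: leq_trans (card_setU_le _ _) _; rewrite card_swap.
  apply: leq_trans (card_bigcup_le _ _) _.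
  rewrite -addnn -big_split /=; apply: leq_sum => z _.
  by apply: leq_trans (card_setU_le _ _) _; rewrite card_swap.
have h1 := e2_h hs hi sall hV hout.
have h2 := sum_Rz hV hout.
have h3 := sum_out hV hout.
have h4 := sum_Wc hs hV hout.
have h5 := sum_inn hs s.
set SA := \sum_c #|Cc c|.
set SR := \sum_z #|Rz h s z|.
set K := t * t * t.
have tK : t <= K by rewrite /K -{1}(muln1 t) -mulnA leq_mul2l (muln_gt0 t t) t0 orbT.
have tt : t <= t * t by rewrite -{1}(muln1 t) leq_mul2l t0 orbT.
have f1 : M * e2 g <= M * (6 * (K * #|V|)) + M * SA.*2.
  rewrite -mulnDr leq_mul2l; apply/orP; right.
  have tV : t * #|V| <= K * #|V| by rewrite leq_mul2r tK orbT.
  have h2' : SR <= (K * #|V|).*2 by rewrite doubleMl.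
  lia.
have f2 : 12 * K * M * #|V| <= N * #|V| by rewrite leq_mul2r hN orbT.
have f3 : N * #|V| <= 4 * (M * SA).
  have : M * (6 * (K * #|V|)) = 6 * (K * M * #|V|) by nia.
  have : M * SA.*2 = 2 * (M * SA) by nia.
  have : 12 * K * M * #|V| = 12 * (K * M * #|V|) by nia.
  lia.
have SBle : \sum_c (#|inn h s c| + #|Wc h s c|) <= 3 * ((t * t) * #|V|).
  rewrite big_split /= h5.
  apply: leq_trans (leq_add h3 h4) _.
  have : t * #|V| <= t * t * #|V| by rewrite leq_mul2r tt orbT.
  have : (t * t).*2 * #|V| = 2 * (t * t * #|V|) by nia.
  lia.
have Vpos : 0 < #|V| by rewrite card_gt0.
have Npos : 0 < N.
  apply: leq_trans hN; rewrite !muln_gt0 /= t0 M0 //.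
have SApos : 0 < SA.
  have : 0 < N * #|V| by rewrite muln_gt0 Npos Vpos.
  move=> H; have := leq_trans H f3; rewrite !muln_gt0 => /andP [_ /andP [_ //]].
have P1 : \sum_c N * (#|inn h s c| + #|Wc h s c|) <= \sum_c (12 * (t * t) * M) * #|Cc c|.
  rewrite -!big_distrr /=.
  apply: leq_trans (_ : N * (3 * (t * t * #|V|)) <= _); first by rewrite leq_mul2l SBle orbT.
  have -> : N * (3 * (t * t * #|V|)) = 3 * (t * t) * (N * #|V|) by nia.
  have -> : 12 * (t * t) * M * SA = 3 * (t * t) * (4 * (M * SA)) by nia.
  by rewrite leq_mul2l f3 orbT.
have P2 : 0 < \sum_c (12 * (t * t) * M) * #|Cc c|.
  by rewrite -big_distrr /= !muln_gt0 t0 M0 SApos.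
have [c [hc1 hc2]] := avg_exists P1 P2.
set I := inn h s c.
set W := Wc h s c.
have CcP : 0 < #|Cc c|.
  by move: hc2; rewrite !muln_gt0 => /andP [_ ->].
have [[q1 q2] qC] : exists q, q \in Cc c by apply/set0Pn; rewrite -card_gt0.
move: qC; rewrite /Cc in_set /= => /and3P [gq q1I q2W].
have inI : forall y, y \in I -> h c y by move=> y; rewrite /I /inn inE => /andP [].
have inW : forall y, y \in W -> y != c /\ exists b, h c b /\ h b y.
  move=> y; rewrite /W /Wc in_setD1 => /andP [yc /bigcupP [b bI yb]]; split => //.
  exists b; split; first exact: inI.
  by move: yb; rewrite in_setU /inn /out !inE => /orP [] /andP [].
exists c, [rel x y | g x y && (((x \in I) && (y \in W)) || ((y \in I) && (x \in W)))], (I :|: W).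
split.
- split.
  + exact: (hV c q1 (inI q1 q1I)).
  + rewrite in_setU negb_or; apply/andP; split.
      by apply/negP => /inI; rewrite hi.
    by apply/negP => /inW [] /eqP.
  + apply/subsetP => y; rewrite in_setU => /orP [/inI hy | /inW [_ [b [_ hy]]]].
      by apply: (hV y c); rewrite hs.
    by apply: (hV y b); rewrite hs.
  + by apply/set0Pn; exists q1; rewrite in_setU q1I.
- split.
  + move=> x y /=; rewrite gs; congr (_ && _); by rewrite orbC.
  + by move=> x /=; rewrite gi.
  + by move=> x y /= /andP [].
  + move=> x y /= /andP [_ /orP [] /andP [k1 k2]]; by rewrite in_setU ?k1 ?k2 ?orbT.
- apply: leq_trans (_ : N * (#|I| + #|W|) <= _).
    by rewrite leq_mul2l card_setU_le orbT.
  apply: leq_trans hc1 _; rewrite leq_mul2l; apply/orP; right.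
  rewrite /e2; apply: subset_leq_card; apply/subsetP => [[x y]].
  rewrite /Cc in_set /= => /and3P [gxy k1 k2]; rewrite in_set /= gxy k1 k2 //.
- move=> y; rewrite in_setU => /orP [/inI hy _ | /inW [_ [b [hcb hby]]]].
    exact: hg.
  move: (gX _ _ (hg _ _ hcb)) (gX _ _ (hg _ _ hby)).
  by case: (c \in X); case: (b \in X); case: (y \in X).
Qed.
End Step.

Import ssrnat.
From mathcomp Require Import ssralg zmodp ring.
Import ssrnat.

Section Emb.
Variable T : finType.
Variables (U : finType) (A : {set T}) (x0 : T).
Hypothesis UA : #|U| <= #|A|.

Definition emb (u : U) : T := nth x0 (enum A) (enum_rank u).

Lemma emb_inj : injective emb.
Proof.
move=> u v; rewrite /emb => /eqP; rewrite nth_uniq ?enum_uniq //.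
- by move/eqP => /val_inj /enum_rank_inj.
- by rewrite -cardE; apply: leq_trans UA; exact: ltn_ord.
- by rewrite -cardE; apply: leq_trans UA; exact: ltn_ord.
Qed.

Lemma emb_mem u : emb u \in A.
Proof.
rewrite /emb -(mem_enum (mem A)); apply: mem_nth.
by rewrite -cardE; apply: leq_trans UA; exact: ltn_ord.
Qed.
End Emb.

Section Alg.
Variable p : nat.
Hypothesis pr : prime p.

Lemma Fp_nat_inj (i j : nat) : i < p -> j < p -> ((i%:R : 'F_p) == j%:R)%R = (i == j).
Proof.
move=> ip jp; apply/eqP/eqP => [E | -> //].
have := congr1 (@nat_of_ord _) E; rewrite !val_Fp_nat // !modn_small //.
Qed.

Lemma lines_meet (a1 b1 a2 b2 : 'F_p) (i j : nat) : i < p -> j < p -> i != j ->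
  (a1 + i%:R * b1 = a2 + i%:R * b2)%R -> (a1 + j%:R * b1 = a2 + j%:R * b2)%R ->
  a1 = a2 /\ b1 = b2.
Proof.
move=> ip jp ij E1 E2.
have E3 : ((i%:R - j%:R) * (b1 - b2) = 0 :> 'F_p)%R.
  have -> : ((i%:R - j%:R) * (b1 - b2) = ((a1 + i%:R * b1) - (a2 + i%:R * b2)) - ((a1 + j%:R * b1) - (a2 + j%:R * b2)) :> 'F_p)%R by ring.
  by rewrite E1 E2 !GRing.subrr.
have nz : ((i%:R - j%:R : 'F_p) != 0)%R by rewrite GRing.subr_eq0 Fp_nat_inj.
move/eqP: E3; rewrite GRing.mulf_eq0 (negbTE nz) /= GRing.subr_eq0 => /eqP eb.
split => //; move: E1; rewrite eb => /GRing.addIr //.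
Qed.
End Alg.

Section Construct.
Variable T : finType.
Variable e : rel T.
Variable t : nat.
Variable V0 : {set T}.
Variable p : nat.
Hypothesis pr : prime p.
Hypothesis t0 : 0 < t.
Hypothesis tp : t <= p.
Variables Pt Ln : {set T}.
Variable x0 : T.
Hypothesis cPt : #|{: 'I_t * 'F_p}| <= #|Pt|.
Hypothesis cLn : #|{: 'F_p * 'F_p}| <= #|Ln|.
Hypothesis dPL : [disjoint Pt & Ln].
Hypothesis PV : Pt \subset V0.
Hypothesis LV : Ln \subset V0.
Hypothesis ePL : forall x y, x \in Pt -> y \in Ln -> e x y && e y x.

Definition pt := emb Pt x0 (U := ('I_t * 'F_p)%type).
Definition ln := emb Ln x0 (U := ('F_p * 'F_p)%type).
Definition vl (q : 'F_p * 'F_p) (i : 'I_t) : 'F_p := (q.1 + (i : nat)%:R * q.2)%R.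
Arguments vl : simpl never.

Definition fc (x y : T) := [exists q : 'F_p * 'F_p, exists i : 'I_t,
  ((x == ln q) && (y == pt (i, vl q i))) || ((y == ln q) && (x == pt (i, vl q i)))].

Lemma pt_in r : pt r \in Pt. Proof. exact: emb_mem. Qed.
Lemma ln_in q : ln q \in Ln. Proof. exact: emb_mem. Qed.
Lemma pt_inj : injective pt. Proof. exact: emb_inj. Qed.
Lemma ln_inj : injective ln. Proof. exact: emb_inj. Qed.
Lemma ln_nPt q : ln q \notin Pt.
Proof. by rewrite (disjointFl dPL (ln_in q)). Qed.
Lemma pt_ln r q : pt r != ln q.
Proof. by apply/eqP => E; move: (pt_in r); rewrite E (negbTE (ln_nPt q)). Qed.

Lemma fcP x y : reflect
  ((exists q i, x = ln q /\ y = pt (i, vl q i)) \/ (exists q i, y = ln q /\ x = pt (i, vl q i)))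
  (fc x y).
Proof.
apply: (iffP existsP) => [[q /existsP [i /orP [] /andP [/eqP -> /eqP ->]]] | ].
- by left; exists q, i.
- by right; exists q, i.
case=> [[q [i [-> ->]]] | [q [i [-> ->]]]]; exists q; apply/existsP; exists i; by rewrite !eqxx ?orbT.
Qed.

Lemma fc_sym : symmetric fc.
Proof.
move=> x y; apply/fcP/fcP; case=> H; by [left | right].
Qed.

Lemma fc_irr : irreflexive fc.
Proof.
move=> x; apply/negbTE/negP; case/fcP => [] [q [i [E1 E]]]; move: (pt_ln (i, vl q i) q); by rewrite -E E1 eqxx.
Qed.

Lemma fc_bip x y : fc x y -> (x \in Pt) != (y \in Pt).
Proof. by case/fcP => [] [q [i [-> ->]]]; rewrite pt_in (negbTE (ln_nPt q)). Qed.

Lemma fc_e x y : fc x y -> e x y.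
Proof.
case/fcP => [] [q [i [-> ->]]].
- by case/andP: (ePL (pt_in (i, vl q i)) (ln_in q)).
- by case/andP: (ePL (pt_in (i, vl q i)) (ln_in q)).
Qed.

Lemma ln_adj q y : fc (ln q) y -> exists i, y = pt (i, vl q i).
Proof.
case/fcP => [] [q' [i [E1 E2]]].
- by exists i; rewrite E2 (ln_inj E1).
- by move: (pt_ln (i, vl q' i) q); rewrite -E2 eqxx.
Qed.

Lemma two_pts q1 q2 (i j : 'I_t) : vl q1 i = vl q2 i -> vl q1 j = vl q2 j -> i != j -> q1 = q2.
Proof.
move=> E1 E2 ij.
have ip : (i : nat) < p by apply: leq_trans (ltn_ord i) tp.
have jp : (j : nat) < p by apply: leq_trans (ltn_ord j) tp.
case: (lines_meet pr ip jp ij E1 E2) => h1 h2.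
by rewrite [q1]surjective_pairing [q2]surjective_pairing h1 h2.
Qed.

Lemma fc_c4 a b c d : uniq [:: a; b; c; d] -> fc a b -> fc b c -> fc c d -> fc d a -> False.
Proof.
move=> u fab fbc fcd fda.
move: (u); rewrite uniq4 => /andP [ab /andP [ac /andP [ad /andP [bc /andP [bd cd]]]]].
case/fcP: fab => [[q1 [i [ea eb]]] | [q1 [i [eb ea]]]].
-
  subst a b.
  case/fcP: fbc => [[q [k [E _]]] | [q2 [i' [ec E]]]].
    by move: (pt_ln (i, vl q1 i) q); rewrite E eqxx.
  subst c; move: (congr1 snd (pt_inj E)) (congr1 fst (pt_inj E)) => /= ev ei; subst i'.
  have [j ed] := ln_adj fcd; subst d.
  rewrite fc_sym in fda; have [j' E'] := ln_adj fda.
  move: (congr1 snd (pt_inj E')) (congr1 fst (pt_inj E')) => /= ev' ej; subst j'.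
  have ij : i != j.
    apply/negP => /eqP eij; subst j; move: bd; by rewrite ev eqxx.
  have eq12 := two_pts ev (esym ev') ij.
  by move: ac; rewrite eq12 eqxx.
-
  subst a b.
  have [j ec] := ln_adj fbc; subst c.
  case/fcP: fcd => [[q [k [E _]]] | [q2 [j' [ed E]]]].
    by move: (pt_ln (j, vl q1 j) q); rewrite E eqxx.
  subst d; move: (congr1 snd (pt_inj E)) (congr1 fst (pt_inj E)) => /= ev ej; subst j'.
  have [i' E'] := ln_adj fda.
  move: (congr1 snd (pt_inj E')) (congr1 fst (pt_inj E')) => /= ev' ei; subst i'.
  have ij : i != j.
    apply/negP => /eqP eij; subst j; move: ac; by rewrite eqxx.
  have eq12 := two_pts ev' ev ij.
  by move: bd; rewrite eq12 eqxx.
Qed.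

Lemma construct_good : good e t V0.
Proof.
set V' := [set x | [exists y, fc x y]].
have fV : forall x y, fc x y -> x \in V' by move=> x y fxy; rewrite inE; apply/existsP; exists y.
have VV0 : V' \subset V0.
  apply/subsetP => x; rewrite inE => /existsP [y /fcP [] [q [i [E1 E2]]]].
  - by rewrite E1; apply: (subsetP LV); apply: ln_in.
  - by rewrite E2; apply: (subsetP PV); apply: pt_in.
exists V', fc; split; [|split; [|split]].
- split; last split => //.
  + split; [exact: fc_sym | split; [exact: fc_irr |]].
    by move=> x y fxy; rewrite (fV _ _ fxy) (fV y x) // fc_sym.
  + exact: fc_e.
- apply/set0Pn; exists (ln (0%R, 0%R)); apply: (fV _ (pt (Ordinal t0, vl (0%R, 0%R) (Ordinal t0)))).
  apply/fcP; left; by exists (0%R, 0%R), (Ordinal t0).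
- apply: avg_ge => //.
  + split; [exact: fc_sym | split; [exact: fc_irr |]].
    by move=> x y fxy; rewrite (fV _ _ fxy) (fV y x) // fc_sym.
  + by apply/set0Pn; exists (ln (0%R, 0%R)); apply: (fV _ (pt (Ordinal t0, vl (0%R, 0%R) (Ordinal t0)))); apply/fcP; left; exists (0%R, 0%R), (Ordinal t0).
  + move=> x; rewrite inE => /existsP [y /fcP [] [q [i [E1 E2]]]]; [rewrite E1 | rewrite E2].
    * rewrite /deg.
      have <- : #|[set pt (k, vl q k) | k : 'I_t]| = t.
        rewrite card_imset ?card_ord //.
        by move=> k1 k2 /pt_inj [].
      apply: subset_leq_card; apply/subsetP => z /imsetP [k _ ->]; rewrite inE.
      by apply/fcP; left; exists q, k.
    * rewrite /deg.
      apply: leq_trans tp _.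
      have C : #|[set ln ((vl q i - (i : nat)%:R * b)%R, b) | b : 'F_p]| = p.
        rewrite card_imset ?card_Fp //.
        by move=> b1 b2 /ln_inj [].
      apply: (@leq_trans #|[set ln ((vl q i - (i : nat)%:R * b)%R, b) | b : 'F_p]|); first by rewrite C.
      apply: subset_leq_card; apply/subsetP => z /imsetP [b _ ->]; rewrite inE.
      apply/fcP; right; exists ((vl q i - (i : nat)%:R * b)%R, b), i; split => //.
      by rewrite {2}/vl /= GRing.subrK.
- apply: (@girth_bip _ _ Pt); first exact: fc_bip.
  exact: fc_c4.
Qed.
End Construct.

Import ssrnat.
From mathcomp Require Import ssralg zmodp.
Import ssrnat.

Lemma disjU1 (T : finType) (x : T) (A B : {set T}) :
  x \notin B -> [disjoint A & B] -> [disjoint x |: A & B].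
Proof.
move=> xB; rewrite !disjoints_subset => /subsetP H; apply/subsetP => y.
rewrite in_setU1 => /orP [/eqP -> | yA]; first by rewrite inE.
exact: H.
Qed.

Section Iter.
Variable T : finType.
Variable e : rel T.
Variable t : nat.
Variable V0 : {set T}.
Variable X : {set T}.

Definition state N j := exists (g : rel T) (V P Q : {set T}),
  [/\ [/\ symmetric g, irreflexive g, (forall x y, g x y -> e x y), (forall x y, g x y -> x \in V)
        & (forall x y, g x y -> (x \in X) != (y \in X))],
      [/\ V \subset V0, V != set0 & N * #|V| <= (12 * (t * t)) ^ j * e2 g],
      [/\ [disjoint P & V], [disjoint Q & V], P \subset V0 & Q \subset V0]
    & [/\ (forall x y, x \in P -> y \in V -> y \in X -> e x y),
          (forall x y, x \in Q -> y \in V -> y \notin X -> e x y) & #|P| + #|Q| = j]].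

Lemma iter_step N L j : 0 < t -> 12 * (t * t * t) * (12 * (t * t)) ^ L <= N -> j < L ->
  state N j -> good e t V0 \/ state N j.+1.
Proof.
move=> t0 hN jL [g [V [P [Q [[gs gi ge gV gX] [VV0 Vn hE] [dP dQ PV0 QV0] [Pc Qc cPQ]]]]]].
have M0 : 0 < (12 * (t * t)) ^ j by rewrite expn_gt0 !muln_gt0 t0.
have hN' : 12 * (t * t * t) * (12 * (t * t)) ^ j <= N.
  apply: leq_trans hN; rewrite leq_mul2l; apply/orP; right.
  by rewrite leq_pexp2l ?muln_gt0 ?t0 // ltnW.
case: (step t0 gs gi ge gV VV0 gX Vn M0 hN' hE) => [G | [c [g' [V' [[cV cV' V'V V'n] [g's g'i g'g g'V] cnt side]]]]].
  by left.
right.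
have cnt' : N * #|V'| <= (12 * (t * t)) ^ j.+1 * e2 g' by rewrite expnS.
have g'props : [/\ symmetric g', irreflexive g', (forall x y, g' x y -> e x y), (forall x y, g' x y -> x \in V')
        & (forall x y, g' x y -> (x \in X) != (y \in X))].
  split => //.
  - by move=> x y /g'g /ge.
  - by move=> x y /g'g /gX.
have V'V0 : V' \subset V0 by apply: subset_trans V'V VV0.
have cQ : c \notin Q by rewrite (disjointFl dQ cV).
have cP : c \notin P by rewrite (disjointFl dP cV).
have dP' : [disjoint P & V'] by apply: disjointWr V'V dP.
have dQ' : [disjoint Q & V'] by apply: disjointWr V'V dQ.
have cV0 : c \in V0 by apply: (subsetP VV0).
case: (boolP (c \in X)) => cX.
- exists g', V', P, (c |: Q); split => //.
  + split => //; first exact: disjU1.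
    by apply/subsetP => x; rewrite in_setU1 => /orP [/eqP -> // | /(subsetP QV0)].
  + split.
    * move=> x y xP yV' yX; apply: Pc xP _ yX; exact: (subsetP V'V).
    * move=> x y; rewrite in_setU1 => /orP [/eqP -> | xQ] yV' yX.
        by apply: ge; apply: side => //; rewrite cX (negbTE yX).
      by apply: Qc xQ _ yX; apply: (subsetP V'V).
    * by rewrite cardsU1 cQ add1n addnS cPQ.
- exists g', V', (c |: P), Q; split => //.
  + split => //; first exact: disjU1.
    by apply/subsetP => x; rewrite in_setU1 => /orP [/eqP -> // | /(subsetP PV0)].
  + split.
    * move=> x y; rewrite in_setU1 => /orP [/eqP -> | xP] yV' yX.
        by apply: ge; apply: side => //; rewrite yX (negbTE cX).
      by apply: Pc xP _ yX; apply: (subsetP V'V).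
    * move=> x y xQ yV' yX; apply: Qc xQ _ yX; exact: (subsetP V'V).
    * by rewrite cardsU1 cP add1n addSn cPQ.
Qed.

Lemma iter_all N L : 0 < t -> 12 * (t * t * t) * (12 * (t * t)) ^ L <= N ->
  state N 0 -> good e t V0 \/ state N L.
Proof.
move=> t0 hN s0.
suff : forall j, j <= L -> good e t V0 \/ state N j by apply.
elim=> [_ | j IH jL]; first by right.
case: (IH (ltnW jL)) => [G | sj]; first by left.
exact: (iter_step t0 hN jL sj).
Qed.


Lemma sides_big N M (g : rel T) (V : {set T}) :
  (forall x y, g x y -> x \in V) -> symmetric g -> (forall x y, g x y -> (x \in X) != (y \in X)) ->
  V != set0 -> 0 < M -> N * #|V| <= M * e2 g ->
  forall k, (k * M).*2 <= N -> k <= #|V :&: X| /\ k <= #|V :\: X|.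
Proof.
move=> gV gs gX Vn M0 hE k hk.
set a := #|V :&: X|; set b := #|V :\: X|.
have Vab : #|V| = a + b by rewrite /a /b cardsID.
have e2ab : e2 g <= (a * b).*2.
  rewrite /e2 -addnn.
  apply: leq_trans (_ : #|setX (V :&: X) (V :\: X) :|: setX (V :\: X) (V :&: X)| <= _).
    apply: subset_leq_card; apply/subsetP => [[x y]]; rewrite inE /= => gxy.
    have xV := gV _ _ gxy; have yV : y \in V by apply: (gV y x); rewrite gs.
    have := gX _ _ gxy.
    rewrite !in_setU !in_setX !in_setI !in_setD xV yV /=.
    by case: (x \in X); case: (y \in X).
  by apply: leq_trans (card_setU_le _ _) _; rewrite !cardsX [b * a]mulnC.
have abpos : 0 < a + b by rewrite -Vab card_gt0.
have H1 : (k * M).*2 * (a + b) <= M * (a * b).*2.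
  apply: leq_trans (_ : N * (a + b) <= _); first by rewrite leq_mul2r hk orbT.
  rewrite -Vab; apply: leq_trans hE _; by rewrite leq_mul2l e2ab orbT.
have H2 : k * (a + b) <= a * b.
  have : M * (k * (a + b)).*2 <= M * (a * b).*2.
    apply: leq_trans H1; rewrite -!muln2; nia.
  by rewrite leq_mul2l (negbTE (lt0n_neq0 M0)) /= leq_double.
split.
- have : k * (a + b) <= a * (a + b) by apply: leq_trans H2 _; rewrite leq_mul2l leq_addl orbT.
  by rewrite leq_mul2r (negbTE (lt0n_neq0 abpos)).
- have : k * (a + b) <= b * (a + b) by apply: leq_trans H2 _; rewrite mulnC leq_mul2l leq_addr orbT.
  by rewrite leq_mul2r (negbTE (lt0n_neq0 abpos)).
Qed.

Hypothesis es : symmetric e.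

Lemma final_good N L p : 0 < t -> prime p -> t <= p -> (t * p).*2 <= L ->
  ((p * p) * (12 * (t * t)) ^ L).*2 <= N -> state N L -> good e t V0.
Proof.
move=> t0 pr tp hL hN [g [V [P [Q [[gs gi ge gV gX] [VV0 Vn hE] [dP dQ PV0 QV0] [Pc Qc cPQ]]]]]].
have M0 : 0 < (12 * (t * t)) ^ L by rewrite expn_gt0 !muln_gt0 t0.
have [sa sb] := sides_big gV gs gX Vn M0 hE hN.
have [x0 _] : exists x0, x0 \in V by apply/set0Pn.
have cF : #|{: 'I_t * 'F_p}| = t * p by rewrite card_prod card_ord zmodp.card_Fp.
have cFF : #|{: 'F_p * 'F_p}| = p * p by rewrite card_prod zmodp.card_Fp.
case: (leqP (t * p) #|P|) => hP.
- apply: (construct_good pr t0 tp x0 (Pt := P) (Ln := V :&: X)).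
  + by rewrite cF.
  + by rewrite cFF.
  + by apply: disjointWr dP; apply: subsetIl.
  + done.
  + by apply: subset_trans VV0; apply: subsetIl.
  + move=> x y xP; rewrite in_setI => /andP [yV yX].
    by rewrite (Pc x y xP yV yX) es (Pc x y xP yV yX).
- have hQ : t * p <= #|Q| by move: hL; rewrite -cPQ; lia.
  apply: (construct_good pr t0 tp x0 (Pt := Q) (Ln := V :\: X)).
  + by rewrite cF.
  + by rewrite cFF.
  + by apply: disjointWr dQ; apply: subsetDl.
  + done.
  + by apply: subset_trans VV0; apply: subsetDl.
  + move=> x y xQ; rewrite in_setD => /andP [yX yV].
    by rewrite (Qc x y xQ yV yX) es (Qc x y xQ yV yX).
Qed.
End Iter.


Lemma expn_mono_base m n e : m <= n -> m ^ e <= n ^ e.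
Proof. move=> mn; elim: e => [|e IH] //; rewrite !expnS; exact: leq_mul. Qed.

Lemma fact_le t : t`! <= t ^ t.
Proof.
elim: t => [|n IH] //; rewrite factS expnS leq_mul2l; apply/orP; right.
apply: leq_trans IH _; exact: expn_mono_base.
Qed.

Lemma pdiv_props t : 0 < t ->
  [/\ prime (pdiv t`!.+1), t <= pdiv t`!.+1 & pdiv t`!.+1 <= 2 ^ (t * t)].
Proof.
move=> t0; set p := pdiv t`!.+1.
have pr : prime p by apply: pdiv_prime; rewrite ltnS fact_gt0.
split => //.
- case: (leqP t p) => // pt; exfalso.
  have d1 : p %| t`! by apply: dvdn_fact; rewrite prime_gt0 //= ltnW.
  have d2 : p %| t`!.+1 by apply: pdiv_dvd.
  move: d2; rewrite -addn1 dvdn_addr // dvdn1 => /eqP p1.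
  by move: pr; rewrite p1.
- apply: leq_trans (_ : t`!.+1 <= _).
    by apply: dvdn_leq => //; apply: pdiv_dvd.
  apply: leq_ltn_trans (fact_le t) _.
  rewrite expnM ltn_exp2r //; exact: ltn_expl.
Qed.

Lemma expn2_pos k : 0 < 2 ^ k. Proof. by rewrite expn_gt0. Qed.

Lemma numeric t : 0 < t ->
  let p := pdiv t`!.+1 in
  12 * (t * t * t) * (12 * (t * t)) ^ (t * p).*2 <= 2 ^ (2 ^ (10 * (t * t))).-1 /\
  ((p * p) * (12 * (t * t)) ^ (t * p).*2).*2 <= 2 ^ (2 ^ (10 * (t * t))).-1.
Proof.
move=> t0 p.
have [pr tp pu] := pdiv_props t0; rewrite -/p in pr tp pu.
set u := t * t.
rewrite -/u in pu.
have u1 : 1 <= u by rewrite muln_gt0 t0.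
have tu : t <= u by rewrite /u -{1}(muln1 t) leq_mul2l t0 orbT.
have uu := ltn_expl u (isT : 1 < 2).
have A1 : 12 * u <= 2 ^ (u + 4) by rewrite expnD; lia.
have A2 : (t * p).*2 <= (u * 2 ^ u).*2 by rewrite leq_double; apply: leq_mul.
set L := (t * p).*2.
have A3 : (12 * u) ^ L <= 2 ^ ((u + 4) * L).
  by rewrite expnM; apply: expn_mono_base.
have A4 : (u + 4) * L <= 2 ^ (3 * u + 4).
  have : u + 4 <= 2 ^ (u + 3) by rewrite expnD; lia.
  have : (u * 2 ^ u).*2 <= 2 ^ (2 * u + 1).
    have -> : 2 ^ (2 * u + 1) = 2 * (2 ^ u * 2 ^ u).
      by rewrite -expnD -[2 * (2 ^ _)]expnS; congr (_ ^ _); lia.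
    nia.
  move=> h1 h2.
  apply: leq_trans (_ : 2 ^ (u + 3) * 2 ^ (2 * u + 1) <= _).
    by apply: leq_mul => //; apply: leq_trans A2 h1.
  by rewrite -expnD; apply: leq_pexp2l => //; lia.
have A5 : 12 * (t * t * t) <= 2 ^ (2 * u + 4).
  have : t * t * t <= u * u by rewrite /u leq_mul2l tu orbT.
  have : u * u <= 2 ^ u * 2 ^ u by apply: leq_mul; apply: ltnW.
  have -> : 2 ^ (2 * u + 4) = 16 * (2 ^ u * 2 ^ u).
    by rewrite -expnD mulnC -[16]/(2 ^ 4) -expnD; congr (_ ^ _); lia.
  move=> h1 h2; lia.
have A6 : (p * p).*2 <= 2 ^ (2 * u + 1).
  have -> : 2 ^ (2 * u + 1) = 2 * (2 ^ u * 2 ^ u).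
    by rewrite -expnD -[2 * (2 ^ _)]expnS; congr (_ ^ _); lia.
  have := leq_mul pu pu; lia.
have Y : (12 * u) ^ L <= 2 ^ (2 ^ (3 * u + 4)).
  apply: leq_trans A3 _; apply: leq_pexp2l => //.
have F : 2 * u + 4 + 2 ^ (3 * u + 4) <= (2 ^ (10 * u)).-1.
  have : 2 * u + 4 <= 2 ^ (3 * u + 4).
    apply: leq_trans (_ : 2 ^ (2 * u + 4) <= _); last by apply: leq_pexp2l => //; lia.
    rewrite expnD; have : u <= 2 ^ u by apply: ltnW.
    have -> : 2 * u = u + u by lia.
    rewrite expnD; nia.
  have : 2 ^ (3 * u + 5) <= 2 ^ (10 * u - 1) by apply: leq_pexp2l => //; lia.
  have : 2 ^ (10 * u) = 2 * 2 ^ (10 * u - 1).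
    by rewrite -expnS; congr (_ ^ _); lia.
  have : 2 ^ (3 * u + 5) = 2 * 2 ^ (3 * u + 4) by rewrite -expnS addnS.
  have := expn2_pos (10 * u - 1).
  lia.
split.
- apply: leq_trans (_ : 2 ^ (2 * u + 4) * 2 ^ (2 ^ (3 * u + 4)) <= _).
    by apply: leq_mul.
  by rewrite -expnD; apply: leq_pexp2l.
- rewrite doubleMl.
  apply: leq_trans (_ : 2 ^ (2 * u + 1) * 2 ^ (2 ^ (3 * u + 4)) <= _).
    by apply: leq_mul.
  rewrite -expnD; apply: leq_pexp2l => //; apply: leq_trans F; lia.
Qed.

Import ssrnat.

Delimit Scope R_scope with R.

Theorem theorem3 :
  exists c : R, (0 < c)%R /\
  forall (t : nat), 0 < t ->
  forall (T : finType) (V : {set T}) (e : rel T),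
    simple_graph V e -> V != set0 ->
    (Rpower 2 (Rpower 2 (c * INR t ^ 2)) <= avg_degree V e)%R ->
    exists (V' : {set T}) (f : rel T),
      subgraph V' f V e /\ V' != set0 /\
      (INR t <= avg_degree V' f)%R /\ girth_ge f 6.
Proof.
exists (INR 10); split; first by apply: lt_0_INR; apply/ltP.
move=> t t0 T V e [es [ei eV]] Vn hth.
set K := 2 ^ (10 * (t * t)).
have hnat : 2 ^ K * #|V| <= (nedges e).*2 by apply: thr_nat.
have e2e : e2 e = (nedges e).*2 by rewrite nedges_e2.
have [X hX] := maxcut ei.
set g0 := cross e X.
have K1 : 0 < K by rewrite /K expn_gt0.
set N := 2 ^ K.-1.
have hN0 : N * #|V| <= (12 * (t * t)) ^ 0 * e2 g0.
  rewrite expn0 mul1n -leq_double.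
  apply: leq_trans hX; rewrite e2e; apply: leq_trans hnat.
  by rewrite -mul2n mulnA -expnS prednK.
have s0 : state e t V X N 0.
  exists g0, V, set0, set0; split.
  - split.
    + by move=> x y; rewrite /g0 /cross /= es eq_sym.
    + by move=> x; rewrite /g0 /cross /= ei.
    + by move=> x y /andP [].
    + by move=> x y /andP [/eV /andP [] ].
    + by move=> x y /andP [].
  - by split.
  - by split; rewrite ?disjoints_subset ?sub0set.
  - by split; [move=> x y; rewrite inE | move=> x y; rewrite inE | rewrite cards0].
have [pr tp _] := pdiv_props t0.
set p := pdiv t`!.+1.
have [n1 n2] := numeric t0.
case: (iter_all (L := (t * p).*2) t0 n1 s0) => // sL.
exact: (final_good es t0 pr tp (leqnn _) n2 sL).
Qed.
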